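(* Fix $M\in\mathbb{N}$, $M\ge3$, and let $\lambda(j)=j\frac{4+j^2}{1+j^2}$. Call an $n$-uple $\{j_1,\dots,j_n\}\subset\mathbb{Z}\setminus\{0\}$, with $n\le M$, an $M$-resonance of order $n$ if $$\sum_{i=1}^nj_i=0,\qquad\sum_{i=1}^n\lambda(j_i)=0,\qquad\sum_{i=1}^n(1+j_i^2)^2j_i^{2(r-2)}\lambda(j_i)=0\quad\forall r=2,\dots,M+1.$$ Then all $M$-resonances are trivial: there are no $M$-resonances of odd order, and the ones of even order are, up to permutations, of the form $(i,-i,j,-j,k,-k,p,-p,\dots)$. *)

(* Defs.v *)
From mathcomp Require Import all_boot all_order all_algebra.
Set Implicit Arguments. Unset Strict Implicit. Unset Printing Implicit Defensive.
Import Order.TTheory GRing.Theory Num.Theory.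
Local Open Scope ring_scope.

Definition lam (j : int) : rat :=
  (j%:~R : rat) * (4 + (j%:~R) ^+ 2) / (1 + (j%:~R) ^+ 2).

(* An M-resonance of order n = size s: an n-uple (a sequence, repetitions
   allowed) of nonzero integers with n <= M satisfying the resonance relations. *)
Definition M_resonance (M : nat) (s : seq int) : Prop :=
  [/\ (size s <= M)%N,
      all (fun j => j != 0) s,
      \sum_(j <- s) j = 0,
      \sum_(j <- s) lam j = 0 &
      forall r : nat, (2 <= r <= M.+1)%N ->
        \sum_(j <- s) ((1 + (j%:~R : rat) ^+ 2) ^+ 2 * (j%:~R) ^+ (2 * (r - 2)) * lam j) = 0].

Definition trivial_resonance (s : seq int) : Prop :=
  exists t : seq int, perm_eq s (flatten [seq [:: x; - x] | x <- t]).

(* Main.v *)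
Require Import Defs.
From mathcomp Require Import all_boot all_order all_algebra ring zify.
Set Implicit Arguments. Unset Strict Implicit. Unset Printing Implicit Defensive.
Import Order.TTheory GRing.Theory Num.Theory.
Local Open Scope ring_scope.

Definition wt (j : int) : rat := (1 + (j%:~R : rat) ^+ 2) ^+ 2 * lam j.

Lemma wtN j : wt (- j) = - wt j.
Proof. by rewrite /wt /lam rmorphN /= sqrrN !mulNr mulrN. Qed.

Lemma wt_neq0 j : j != 0 -> wt j != 0.
Proof.
move=> hj; have hp : (0 : rat) < 1 + (j%:~R) ^+ 2 by rewrite ltr_pwDl // sqr_ge0.
have hp4 : (0 : rat) < 4 + (j%:~R) ^+ 2 by rewrite ltr_pwDl // sqr_ge0.
rewrite /wt /lam !mulf_neq0 ?expf_neq0 ?invr_neq0 ?intr_eq0 // gt_eqF //.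
Qed.

Lemma poly_sum (M : nat) (s : seq int) (P : {poly rat}) :
  (forall r : nat, (2 <= r <= M.+1)%N ->
        \sum_(j <- s) ((1 + (j%:~R : rat) ^+ 2) ^+ 2 * (j%:~R) ^+ (2 * (r - 2)) * lam j) = 0) ->
  (size P <= M)%N ->
  \sum_(j <- s) wt j * P.[(j%:~R) ^+ 2] = 0.
Proof.
move=> H hP.
under eq_bigr => j _ do rewrite horner_coef mulr_sumr.
rewrite exchange_big /= big1 // => k _.
have Hk := H k.+2 (leq_trans (ltn_ord k) hP).
rewrite !subSS subn0 in Hk.
transitivity (P`_k * \sum_(j <- s) (1 + (j%:~R : rat) ^+ 2) ^+ 2 * j%:~R ^+ (2 * k) * lam j); last by rewrite Hk mulr0.
rewrite mulr_sumr; apply: eq_bigr => j _.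
by rewrite /wt exprM; ring.
Qed.

Lemma cancel_aux (w : rat) (a b : nat) : w != 0 -> w *+ a + (- w) *+ b = 0 -> a = b.
Proof.
move=> w0; rewrite mulNrn => /eqP; rewrite subr_eq0 -(mulr_natr w a) -(mulr_natr w b) => /eqP/(mulfI w0)/eqP.
by rewrite eqr_nat => /eqP.
Qed.

Lemma count_sym (M : nat) (s : seq int) :
  (size s <= M)%N ->
  (forall r : nat, (2 <= r <= M.+1)%N ->
        \sum_(j <- s) ((1 + (j%:~R : rat) ^+ 2) ^+ 2 * (j%:~R) ^+ (2 * (r - 2)) * lam j) = 0) ->
  forall x, count_mem x s = count_mem (- x) s.
Proof.
move=> hs H x.
have [->|x0] := eqVneq x 0; first by rewrite oppr0.
case: (boolP ((x \in s) || (-x \in s))) => [hin|]; last first.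
  by rewrite negb_or => /andP[/count_memPn -> /count_memPn ->].
pose p := fun j : int => ((j%:~R : rat) ^+ 2 != (x%:~R) ^+ 2).
pose A := [seq (j%:~R : rat) ^+ 2 | j <- s & p j].
pose P := \prod_(a <- A) ('X - a%:P).
have sizeP : size P = (size A).+1 by rewrite size_prod_XsubC.
have hA : (size A < size s)%N.
  rewrite size_map size_filter -(count_predC p s) -[X in (X < _)%N]addn0 ltn_add2l -has_count.
  apply/hasP; case/orP: hin => hin; [exists x | exists (-x)] => //=;
    by rewrite /p negbK ?rmorphN ?sqrrN.
have hPM : (size P <= M)%N by rewrite sizeP; exact: leq_trans hA hs.
have Px : P.[(x%:~R : rat) ^+ 2] != 0.
  rewrite -/(root P _) root_prod_XsubC; apply/negP => /mapP[j].
  by rewrite mem_filter => /andP[pj _] /esym/eqP; rewrite (negbTE pj).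
have := poly_sum H hPM.
rewrite (bigID p) /= big1_seq ?add0r; last first.
  move=> j /andP[pj js]; apply/eqP; rewrite mulf_eq0; apply/orP; right.
  rewrite -/(root P _) root_prod_XsubC; apply/mapP; exists j => //.
  by rewrite mem_filter pj js.
rewrite (eq_bigl (fun j => (j == x) || (j == -x))); last first.
  by move=> j; rewrite /p negbK eqf_sqr -rmorphN !eqr_int.
have E1 : forall (q : pred int) (c : int), (forall j, q j = (j == c)) ->
    \sum_(j <- s | q j) wt j * P.[(j%:~R : rat) ^+ 2] = (wt c * P.[(c%:~R : rat) ^+ 2]) *+ count_mem c s.
  move=> q c hq; rewrite (eq_bigl _ _ hq).
  rewrite (eq_bigr (fun _ => wt c * P.[(c%:~R : rat) ^+ 2])); last by move=> j /eqP->.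
  by rewrite big_const_seq iter_addr_0.
have hneg : wt (-x) * P.[((-x)%:~R : rat) ^+ 2] = - (wt x * P.[(x%:~R : rat) ^+ 2]).
  by rewrite wtN rmorphN sqrrN mulNr.
have E2 : forall (q : pred int), (forall j, q j = (j == -x)) ->
    \sum_(j <- s | q j) wt j * P.[(j%:~R : rat) ^+ 2] = - (wt x * P.[(x%:~R : rat) ^+ 2]) *+ count_mem (-x) s.
  by move=> q hq; rewrite -hneg; apply: E1.
have w0 : wt x * P.[(x%:~R : rat) ^+ 2] != 0 by rewrite mulf_neq0 ?wt_neq0.
rewrite (bigID (fun j => j == x)) /=.
rewrite (E1 (fun j => ((j == x) || (j == -x)) && (j == x)) x); last first.
  by move=> j; case: (j == x); rewrite ?andbT ?andbF.
rewrite (E2 (fun j => ((j == x) || (j == -x)) && (j != x))); last first.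
  move=> j; case: eqVneq => [->|]; rewrite ?andbT ?andbF ?orbF //.
  apply/esym/eqP => h; move: x0; have : x + x = 0 by rewrite {1}h addNr.
  by rewrite -mulr2n => /eqP; rewrite mulrn_eq0 /= => ->.
move: w0; generalize (wt x * P.[(x%:~R : rat) ^+ 2]) => w w0.
exact: cancel_aux.
Qed.

Lemma count_flat (t : seq int) z :
  count_mem z (flatten [seq [:: y; - y] | y <- t]) = (count_mem z t + count_mem (- z) t)%N.
Proof.
elim: t => [|y t IH] //=; rewrite IH /= eqr_oppLR.
by rewrite !addnA [((y == z) + _ + _)%N]addnAC [((y == z) + _)%N]addnC.
Qed.

Lemma size_flat (t : seq int) :
  size (flatten [seq [:: y; - y] | y <- t]) = (size t).*2.
Proof. by elim: t => [|y t IH] //=; rewrite IH doubleS. Qed.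

Theorem proposition3p2 (M : nat) (hM : (3 <= M)%N) (s : seq int) :
  M_resonance M s -> ~~ odd (size s) /\ trivial_resonance s.
Proof.
case=> hs hnz _ _ H.
have sym := count_sym hs H.
pose t := [seq y <- s | 0 < y].
have pe : perm_eq s (flatten [seq [:: y; - y] | y <- t]).
  apply/allP => z _; apply/eqP; rewrite count_flat /t !count_filter.
  have [z0|z0|->] := ltgtP z 0.
  - rewrite (@eq_count _ (predI _ _) pred0); last first.
      by move=> y /=; case: eqVneq => // ->; rewrite ltNge ltW //.
    rewrite (@eq_count _ (predI _ _) (pred1 (- z))); last first.
      by move=> y /=; case: eqVneq => // ->; rewrite ?eqxx ?andbT oppr_gt0 z0.
    by rewrite count_pred0 sym.
  - rewrite (@eq_count _ (predI _ _) (pred1 z)); last first.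
      by move=> y /=; case: eqVneq => // ->; rewrite ?eqxx ?andbT z0.
    rewrite (@eq_count _ (predI _ _) pred0) ?count_pred0 ?addn0 //.
    by move=> y /=; case: eqVneq => // ->; rewrite oppr_gt0 ltNge ltW //.
  - rewrite oppr0 (@eq_count _ (predI _ _) pred0) ?count_pred0; last first.
      by move=> y /=; case: eqVneq => // ->.
    apply/count_memPn; apply/negP => h0; move/allP: hnz => /(_ _ h0).
    by rewrite eqxx.
split; last by exists t.
by rewrite (perm_size pe) size_flat odd_double.
Qed.
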